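(* Let $G$ be an Abelian group and $(\rho,V)$ a linear representation of $G$ on a finite-dimensional vector space $V$ over a field $k$. Let $A$ be a nonempty finite subset of $G$ and $Y\subset V$ with $\langle Y\rangle\neq\{0\}$ and $\dim(A\cdot Y)\leq\alpha\dim Y$ for some $\alpha\in\mathbb{R}_{\geq0}$. Then there exists a $k$-subspace $Z\neq\{0\}$ of $\langle Y\rangle$ such that $\dim(A^{n}\cdot Z)\leq\alpha^{n}\dim Z$ for every integer $n\geq1$.
   Context: $g\cdot v=\rho(g)v$; $\langle Y\rangle$ is the $k$-span of $Y$ and $\dim Y:=\dim\langle Y\rangle$; for $S\subset G$, $S\cdot Z$ is the $k$-span of $\{s\cdot z\mid s\in S,z\in Z\}$; $A^n=\{a_1\cdots a_n\mid a_i\in A\}$. *)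

(* Defs.v *)
From HB Require Import structures.
From mathcomp Require Import all_boot all_order all_algebra.
From mathcomp Require Import Rstruct.
From Stdlib Require Import ClassicalEpsilon.
Set Implicit Arguments. Unset Strict Implicit. Unset Printing Implicit Defensive.
Import Order.TTheory GRing.Theory Num.Theory.
Local Open Scope ring_scope.

Section Defs.
Variables (k : fieldType) (vT : vectType k).

Definition is_span (Y : vT -> Prop) (W : {vspace vT}) : Prop :=
  (forall y, Y y -> y \in W) /\
  (forall U : {vspace vT}, (forall y, Y y -> y \in U) -> (W <= U)%VS).

(* <Y> : the k-span of Y (it exists and is unique since vT is finite-dim.) *)
Definition span_of (Y : vT -> Prop) : {vspace vT} :=
  epsilon (inhabits 0%VS) (is_span Y).

Definition dim_of (Y : vT -> Prop) : nat := \dim (span_of Y).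

Definition vset (Z : {vspace vT}) : vT -> Prop := fun v => v \in Z.

Variable G : zmodType.

Definition is_rep (rho : G -> 'End(vT)) : Prop :=
  rho 0 = \1%VF /\ forall g h, rho (g + h) = (rho g \o rho h)%VF.

Definition act_span (rho : G -> 'End(vT)) (S : G -> Prop) (Z : vT -> Prop)
  : {vspace vT} :=
  span_of (fun v => exists s z, S s /\ Z z /\ v = rho s z).

(* A^n = { a_1 + ... + a_n | a_i in A } (group law of G written additively) *)
Definition pow_set (A : seq G) (n : nat) : G -> Prop :=
  fun g => exists s : seq G, size s = n /\ all (fun a => a \in A) s /\
                             g = \sum_(a <- s) a.

End Defs.

(* Submission.v *)
Require Import Defs.
From HB Require Import structures.
From mathcomp Require Import all_boot all_order all_algebra.
From mathcomp Require Import Rstruct.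
From Stdlib Require Import Classical ClassicalEpsilon.
From mathcomp Require Import zify.
Import Order.TTheory GRing.Theory Num.Theory.
Local Open Scope ring_scope.
Set Implicit Arguments. Unset Strict Implicit.

Lemma exists_min_nat (T : Type) (P : T -> Prop) (f : T -> nat) :
  (exists x, P x) -> exists x, P x /\ forall y, P y -> (f x <= f y)%N.
Proof.
move=> [x0 Px0].
suff H : forall n x, (f x <= n)%N -> P x ->
  exists x, P x /\ forall y, P y -> (f x <= f y)%N by exact: (H _ x0 (leqnn _) Px0).
elim=> [|n IH] x lex Px.
  exists x; split=> // y _; by move: lex; rewrite leqn0 => /eqP ->.
case: (classic (exists y, P y /\ (f y < f x)%N)) => [[y [Py lt]]|N].
  by apply: (IH y) => //; lia.
exists x; split=> // y Py; rewrite leqNgt; apply/negP=> lt; apply: N; by exists y.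
Qed.

Section Gen.
Variables (k : fieldType) (vT : vectType k).

Lemma span_exists (Y : vT -> Prop) : exists W, is_span Y W.
Proof.
have [U [HU Hmin]] := @exists_min_nat _ (fun U : {vspace vT} => forall y, Y y -> y \in U)
   (fun U => \dim U) (ex_intro (fun U : {vspace vT} => forall y, Y y -> y \in U) fullv (fun y _ => memvf y)).
exists U; split=> // U' HU'.
have HC : forall y, Y y -> y \in (U :&: U')%VS by move=> y Yy; rewrite memv_cap HU ?HU'.
have le := Hmin _ HC.
have E : (U :&: U')%VS == U.
  by rewrite -(dimv_leqif_eq (capvSl U U')).2 eqn_leq le dimvS ?capvSl.
by apply/capv_idPl/eqP.
Qed.

Lemma span_ofE (Y : vT -> Prop) W : is_span Y W -> span_of Y = W.
Proof.
move=> [H1 H2].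
have [H1' H2'] : is_span Y (span_of Y).
  by rewrite /span_of; apply: epsilon_spec; apply: span_exists.
by apply/eqP; rewrite eqEsubv H2' // H2.
Qed.

Lemma span_of_mem (Y : vT -> Prop) y : Y y -> y \in span_of Y.
Proof.
have [H1 H2] : is_span Y (span_of Y).
  by rewrite /span_of; apply: epsilon_spec; apply: span_exists.
exact: H1.
Qed.

Lemma span_of_min (Y : vT -> Prop) (U : {vspace vT}) : (forall y, Y y -> y \in U) -> (span_of Y <= U)%VS.
Proof.
have [H1 H2] : is_span Y (span_of Y).
  by rewrite /span_of; apply: epsilon_spec; apply: span_exists.
exact: H2.
Qed.

Lemma span_vset (Z : {vspace vT}) : span_of (vset Z) = Z.
Proof. by apply: span_ofE; split=> // U; move=> H; apply/subvP. Qed.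

Variable G : zmodType.
Variable rho : G -> 'End(vT).

Definition actv (C : seq G) (Z : {vspace vT}) : {vspace vT} :=
  (\sum_(c <- C) (rho c @: Z))%VS.

Lemma act_spanE (C : seq G) (Y : vT -> Prop) :
  act_span rho (fun a => a \in C) Y = actv C (span_of Y).
Proof.
apply: span_ofE; split.
  move=> v [s [z [sC [Yz ->]]]].
  rewrite /actv (big_rem s sC) /=.
  apply: (subvP (addvSl _ _)); apply: memv_img; exact: span_of_mem.
move=> U HU; rewrite /actv; elim: C HU => [|c C IH] HU; first by rewrite big_nil sub0v.
rewrite big_cons subv_add IH; last first.
  by move=> y [s [z [sC [Yz ->]]]]; apply: HU; exists s, z; rewrite inE sC orbT.
rewrite andbT.
have : (span_of Y <= rho c @^-1: U)%VS.
  apply: span_of_min => y Yy; rewrite -memv_preim; apply: HU; exists c, y.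
  by rewrite inE eqxx.
move=> H; apply/subvP => _ /memv_imgP [u Hu ->].
by rewrite memv_preim; apply: (subvP H).
Qed.

Lemma act_span_ext (S S' : G -> Prop) Y : (forall s, S s <-> S' s) ->
  act_span rho S Y = act_span rho S' Y.
Proof.
move=> E; rewrite {1}/act_span; apply: span_ofE; split.
  move=> v [s [z [Ss [Yz ->]]]]; apply: span_of_mem; exists s, z.
  by split; [apply/E|].
move=> U HU; apply: span_of_min => v [s [z [Ss [Yz ->]]]]; apply: HU.
by exists s, z; split; [apply/E|].
Qed.

End Gen.

Section Rep.
Variables (k : fieldType) (vT : vectType k) (G : zmodType).
Variable rho : G -> 'End(vT).
Hypothesis Hrep : is_rep rho.

Local Notation actv := (Submission.actv rho).

Lemma rhoC a x : (rho a \o rho x = rho x \o rho a)%VF.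
Proof. by case: Hrep => _ H; rewrite -!H addrC. Qed.

Lemma rho_dim x (U : {vspace vT}) : \dim (rho x @: U) = \dim U.
Proof.
apply/eqP; rewrite eqn_leq; apply/andP; split.
  by have := limg_ker_dim (rho x) U; lia.
have E : (rho (- x) @: (rho x @: U))%VS = U.
  by case: Hrep => H0 H; rewrite -limg_comp -H addNr H0 lim1g.
rewrite -{1}E; by have := limg_ker_dim (rho (-x)) (rho x @: U); lia.
Qed.

Lemma actv_nil U : actv [::] U = 0%VS.
Proof. by rewrite /Submission.actv big_nil. Qed.

Lemma actv_cons c C U : actv (c :: C) U = (rho c @: U + actv C U)%VS.
Proof. by rewrite /Submission.actv big_cons. Qed.

Lemma actv_sub C U V : (forall c, c \in C -> (rho c @: U <= V)%VS) -> (actv C U <= V)%VS.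
Proof.
elim: C => [|c C IH] H; first by rewrite actv_nil sub0v.
rewrite actv_cons subv_add H ?inE ?eqxx // IH // => d dC.
by apply: H; rewrite inE dC orbT.
Qed.

Lemma actv_sup c C U : c \in C -> (rho c @: U <= actv C U)%VS.
Proof.
elim: C => [|d C IH] //; rewrite inE actv_cons => /orP [/eqP ->|cC].
  exact: addvSl.
exact: subv_trans _ (IH cC) (addvSr _ _).
Qed.

Lemma actvS C U V : (U <= V)%VS -> (actv C U <= actv C V)%VS.
Proof.
move=> UV; apply: actv_sub => c cC.
exact: subv_trans _ (limgS _ UV) (actv_sup _ cC).
Qed.

Lemma actv0 C : actv C 0 = 0%VS.
Proof. by apply/eqP; rewrite -subv0; apply: actv_sub => c _; rewrite limg0 subvv. Qed.

Lemma actvD C U V : actv C (U + V) = (actv C U + actv C V)%VS.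
Proof.
elim: C => [|c C IH]; first by rewrite !actv_nil addv0.
rewrite !actv_cons IH limgD.
by rewrite -!addvA; congr (_ + _)%VS; rewrite addvC -!addvA; congr (_ + _)%VS; rewrite addvC.
Qed.

Lemma actv_img C x U : actv C (rho x @: U) = (rho x @: actv C U)%VS.
Proof.
elim: C => [|c C IH]; first by rewrite !actv_nil limg0.
by rewrite !actv_cons IH limgD -!limg_comp rhoC.
Qed.

Definition prei (A : seq G) (W : {vspace vT}) : {vspace vT} :=
  foldr (fun a V => (rho a @^-1: W) :&: V)%VS fullv A.

Lemma memv_prei A W v : (v \in prei A W) = all (fun a => rho a v \in W) A.
Proof.
elim: A => [|a A IH] /=; first by rewrite memvf.
by rewrite memv_cap -memv_preim IH.
Qed.

Section Petridis.
Variables (S Z : {vspace vT}) (A : seq G).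
Hypothesis HZS : (Z <= S)%VS.
Hypothesis Hmin : forall Z', (Z' <= S)%VS ->
  (\dim (actv A Z) * \dim Z' <= \dim Z * \dim (actv A Z'))%N.

Lemma petridis C :
  (\dim Z * \dim (actv A (actv C Z)) <= \dim (actv A Z) * \dim (actv C Z))%N.
Proof.
elim: C => [|x C IH]; first by rewrite actv_nil actv0 dimv0 muln0.
set W := actv A (actv C Z).
set Z' := (Z :&: (rho x @^-1: prei A W))%VS.
have H1 : (actv A (rho x @: Z') <= W :&: actv A (rho x @: Z))%VS.
  rewrite subv_cap actvS ?limgS ?capvSl // andbT.
  apply: actv_sub => a aA; apply/subvP => _ /memv_imgP [u /memv_imgP [z Zz ->] ->].
  move: Zz; rewrite memv_cap -memv_preim memv_prei => /andP [_ /allP H].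
  exact: H.
have H2 : (rho x @: Z :&: actv C Z <= rho x @: Z')%VS.
  apply/subvP => v; rewrite memv_cap => /andP [/memv_imgP [z Zz ->] Hv].
  apply: memv_img; rewrite memv_cap Zz -memv_preim memv_prei /=.
  apply/allP => a aA; apply: (subvP (actv_sup _ aA)); exact: memv_img.
have E1 := dimv_sum_cap (actv A (rho x @: Z)) W.
have E2 := dimv_sum_cap (rho x @: Z) (actv C Z).
have D1 := dimvS H1; have D2 := dimvS H2.
rewrite capvC in D1.
rewrite !actv_img !rho_dim in D1 D2 E1 E2.
have M := Hmin (subv_trans (capvSl _ _) HZS : (Z' <= S)%VS).
rewrite actv_cons actvD actv_img.
move: IH D1 D2 E1 E2 M; rewrite -/W.
move=> IH D1 D2 E1 E2 M.
nia.
Qed.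

End Petridis.

End Rep.

Fixpoint powseq (G : zmodType) (A : seq G) (n : nat) : seq G :=
  match n with
  | 0 => [:: 0]
  | n.+1 => [seq a + b | a <- A, b <- powseq A n]
  end.

Lemma pow_setE (G : zmodType) (A : seq G) n g :
  pow_set A n g <-> g \in powseq A n.
Proof.
elim: n g => [|n IH] g /=.
  split; first by move=> [s [/size0nil -> [_ ->]]]; rewrite big_nil inE.
  by rewrite inE => /eqP ->; exists [::]; rewrite big_nil.
split.
  move=> [[|a s] [Hs [Hall ->]]] //.
  move: Hs Hall => /= [Hs] /andP [aA sA].
  rewrite big_cons; apply: allpairs_f => //; apply/IH.
  by exists s.
move=> /allpairsP [[a b] /= [aA /IH [s [Hs [sA ->]]] ->]].
by exists (a :: s); rewrite /= Hs aA sA big_cons.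
Qed.

Section Main.
Variables (k : fieldType) (vT : vectType k) (G : zmodType).
Variable rho : G -> 'End(vT).
Hypothesis Hrep : is_rep rho.
Local Notation actv := (Submission.actv rho).

Lemma actv_pow A n U : actv (powseq A n.+1) U = actv A (actv (powseq A n) U).
Proof.
rewrite /= /Submission.actv big_allpairs_dep.
apply: eq_bigr => a _; rewrite limg_sum; apply: eq_bigr => b _.
by case: Hrep => _ H; rewrite H limg_comp.
Qed.

Lemma actv_pow0 A U : actv (powseq A 0) U = U.
Proof.
by rewrite /= actv_cons actv_nil addv0; case: Hrep => -> _; rewrite lim1g.
Qed.

End Main.

Unset Implicit Arguments.

Theorem mainTheorem19 (k : fieldType) (vT : vectType k) (G : zmodType)
  (rho : G -> 'End(vT)) (A : seq G) (Y : vT -> Prop) (alpha : Rdefinitions.R) :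
  is_rep rho -> A != [::] ->
  span_of Y != 0%VS ->
  0 <= alpha ->
  ((\dim (act_span rho (fun a => a \in A) Y))%:R <= alpha * (dim_of Y)%:R) ->
  exists Z : {vspace vT},
    Z != 0%VS /\ (Z <= span_of Y)%VS /\
    forall n : nat, (1 <= n)%N ->
      (\dim (act_span rho (pow_set A n) (vset Z)))%:R <= alpha ^+ n * (\dim Z)%:R.
Proof.
move=> Hrep HA HY Ha Hdim.
rewrite act_spanE /dim_of in Hdim.
set S := span_of Y in HY Hdim *.
set D := (\dim (fullv : {vspace vT}))`!.
have [Z [[ZS Z0] Hm]] := @exists_min_nat _
  (fun Z : {vspace vT} => (Z <= S)%VS /\ Z != 0%VS)
  (fun Z => \dim (actv rho A Z) * (D %/ \dim Z))%N
  (ex_intro (fun Z : {vspace vT} => (Z <= S)%VS /\ Z != 0%VS) S (conj (subvv S) HY)).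
have dvdD (U : {vspace vT}) : U != 0%VS -> (\dim U * (D %/ \dim U) = D)%N.
  move=> U0; rewrite mulnC divnK //; apply: dvdn_fact.
  by rewrite lt0n dimv_eq0 U0 /= dimvS ?subvf.
have Dpos : (0 < D)%N by exact: fact_gt0.
have Hmin : forall Z', (Z' <= S)%VS ->
    (\dim (actv rho A Z) * \dim Z' <= \dim Z * \dim (actv rho A Z'))%N.
  move=> Z' Z'S; case: (eqVneq Z' 0%VS) => [->|Z'0]; first by rewrite dimv0 muln0.
  have le := Hm Z' (conj Z'S Z'0).
  have e1 := dvdD _ Z0; have e2 := dvdD _ Z'0.
  move: le e1 e2.
  set p := \dim (actv rho A Z); set q := \dim Z; set p' := \dim (actv rho A Z').
  set q' := \dim Z'; set u := (D %/ q)%N; set u' := (D %/ q')%N.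
  move=> le e1 e2.
  have : (p * u * (q * q') <= p' * u' * (q * q'))%N by rewrite leq_mul2r le orbT.
  have -> : (p * u * (q * q') = (p * q') * D)%N by rewrite -e1; lia.
  have -> : (p' * u' * (q * q') = (q * p') * D)%N by rewrite -e2; lia.
  by rewrite leq_pmul2r.
have Hit : forall n, (\dim (actv rho (powseq A n) Z) * \dim Z ^ n
                      <= \dim (actv rho A Z) ^ n * \dim Z)%N.
  elim=> [|n IH]; first by rewrite actv_pow0 // expn0 muln1 mul1n.
  rewrite actv_pow //.
  have P := petridis Hrep ZS Hmin (powseq A n).
  set a := \dim (actv rho A _) in P *; set b := \dim (actv rho (powseq A n) Z) in P IH.
  set p := \dim (actv rho A Z) in P IH *; set q := \dim Z in P IH *.
  rewrite expnS [(p ^ _)%N]expnS.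
  have : (q * a * q ^ n <= p * b * q ^ n)%N by rewrite leq_mul2r P orbT.
  have : (p * (b * q ^ n) <= p * (p ^ n * q))%N by rewrite leq_mul2l IH orbT.
  set x := (q ^ n)%N; set y := (p ^ n)%N.
  move=> h1 h2; rewrite mulnA.
  lia.
exists Z; split=> //; split=> // n n1.
rewrite (act_span_ext _ _ (pow_setE A n)) act_spanE span_vset.
have H1 := Hit n; have H2 := Hmin S (subvv S).
move: H1 H2 Hdim.
set N := \dim (actv rho (powseq A n) Z); set p := \dim (actv rho A Z).
set q := \dim Z; set s := \dim S; set t := \dim (actv rho A S).
move=> H1 H2 Hdim.
have qpos : (0 < q)%N by rewrite lt0n dimv_eq0.
have spos : (0 < s)%N by rewrite lt0n dimv_eq0.
have qR : 0 < (q%:R : Rdefinitions.R) by rewrite ltr0n.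
have sR : 0 < (s%:R : Rdefinitions.R) by rewrite ltr0n.
have H1R : (N%:R * q%:R ^+ n <= p%:R ^+ n * q%:R :> Rdefinitions.R).
  by rewrite -!natrX -!natrM ler_nat.
have H2R : (p%:R * s%:R <= q%:R * t%:R :> Rdefinitions.R).
  by rewrite -!natrM ler_nat.
have hp : (p%:R <= q%:R * alpha :> Rdefinitions.R).
  rewrite -(ler_pM2r sR); apply: le_trans H2R _; rewrite -mulrA.
  by rewrite ler_wpM2l // ltW.
have hpn : (p%:R ^+ n <= (q%:R * alpha) ^+ n :> Rdefinitions.R).
  by apply: lerXn2r; rewrite // nnegrE ?mulr_ge0 // ltW.
rewrite -(ler_pM2r (exprn_gt0 n qR)).
apply: le_trans H1R _.
apply: le_trans (ler_wpM2r (ltW qR) hpn) _.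
by rewrite exprMn [X in _ <= X]mulrC mulrA.
Qed.
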